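(* The prices (data) are consistent if and only if, for every maturity $t$, the following hold: (i) $\dfrac{\overline r_{t,l}-\underline r_{t,j}}{k_{t,l}-k_{t,j}}\ge\dfrac{\underline r_{t,j}-\overline r_{t,i}}{k_{t,j}-k_{t,i}}$ for all $1\le i<j<l\le N_t$; (ii) $\dfrac{\overline r_{t,l}-\underline r_{t,i}}{k_{t,l}-k_{t,i}}\ge-1$ for all $1\le i<l\le N_t$; (iii) $\underline r_{t,j}\le\overline r_{t,i}$ for all $1\le i<j\le N_t$; (iv) for all $1\le i<j\le N_t$: $\underline r_{t,j}=\overline r_{t,i}$ implies $\underline r_{t,j}=\overline r_{t,i}=0$.
   Context: Setting (data): $\mathcal T=\{0,\dots,T\}$, $T\ge1$; positive deterministic bank account $B(t)$, $B(0)=1$, $D(t)=1/B(t)$; for each maturity $t\in\{1,\dots,T\}$ strikes $0<K_{t,1}<\dots<K_{t,N_t}$, discounted strikes $k_{t,i}=D(t)K_{t,i}$, call bid/ask prices $\underline r_{t,i},\overline r_{t,i}>0$; underlying bid/ask $0<\underline S_0\le\overline S_0$. A \emph{model} is a finite probability space with filtration and adapted processes $\underline S,\overline S,S^C$ with $0<\underline S_t\le S^C_t\le\overline S_t$ (time-0 values given). The prices are \emph{consistent} if there is a model such that $\mathbb E[(D(t)S^C_t-k_{t,i})^+]\in[\underline r_{t,i},\overline r_{t,i}]$ for all $t,i$, and there is a process $S^*$ with $\underline S_t\le S^*_t\le\overline S_t$ for all $t$ such that $(D(t)S^*_t)_{t\in\mathcal T}$ is a martingale. No bound on the spread is imposed.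 *)

(* Defs.v *)
From HB Require Import structures.
From mathcomp Require Import all_boot all_order all_algebra.
Set Implicit Arguments.
Unset Strict Implicit.
Unset Printing Implicit Defensive.
Import Order.TTheory GRing.Theory Num.Theory.
Local Open Scope ring_scope.

Section FiniteModels.
Variables (R : realFieldType) (Omega : finType).

(* a sigma-algebra on the finite set Omega (finite unions suffice) *)
Definition sigma_algebra (F : {set {set Omega}}) : Prop :=
  [/\ [set: Omega] \in F,
      (forall A, A \in F -> ~: A \in F) &
      (forall A B, A \in F -> B \in F -> A :|: B \in F)].

Definition filtration (T : nat) (F : nat -> {set {set Omega}}) : Prop :=
  (forall t, (t <= T)%N -> sigma_algebra (F t)) /\
  (forall t, (t < T)%N -> F t \subset F t.+1).

Definition measurable (F : {set {set Omega}}) (X : Omega -> R) : Prop :=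
  forall r : R, [set w | X w == r] \in F.

Definition adapted (T : nat) (F : nat -> {set {set Omega}})
  (X : nat -> Omega -> R) : Prop :=
  forall t, (t <= T)%N -> measurable (F t) (X t).

Definition probability (p : Omega -> R) : Prop :=
  (forall w, 0 <= p w) /\ \sum_w p w = 1.

Definition expect (p : Omega -> R) (X : Omega -> R) : R := \sum_w p w * X w.

Definition martingale (T : nat) (p : Omega -> R)
  (F : nat -> {set {set Omega}}) (M : nat -> Omega -> R) : Prop :=
  adapted T F M /\
  (forall t, (t < T)%N -> forall A, A \in F t ->
     \sum_(w in A) p w * M t.+1 w = \sum_(w in A) p w * M t w).

End FiniteModels.

(* discount factor D(t) = 1/B(t) and discounted strikes k_{t,i} = D(t) K_{t,i} *)
Definition disc (R : realFieldType) (B : nat -> R) (t : nat) : R := (B t)^-1.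
Definition dstrike (R : realFieldType) (B : nat -> R) (K : nat -> nat -> R)
  (t i : nat) : R := disc B t * K t i.

Definition consistent (R : realFieldType) (T : nat) (B : nat -> R)
  (N : nat -> nat) (K rbid rask : nat -> nat -> R) (S0bid S0ask : R) : Prop :=
  exists (Omega : finType) (p : Omega -> R) (F : nat -> {set {set Omega}})
         (Sl Sh SC : nat -> Omega -> R),
    probability p /\ filtration T F /\
    adapted T F Sl /\ adapted T F Sh /\ adapted T F SC /\
    (forall t w, (t <= T)%N -> 0 < Sl t w /\ Sl t w <= SC t w <= Sh t w) /\
    (forall w, Sl 0%N w = S0bid /\ Sh 0%N w = S0ask) /\
        (forall t i, (1 <= t <= T)%N -> (1 <= i <= N t)%N ->
            rbid t i <= expect p (fun w => Num.max (disc B t * SC t w - dstrike B K t i) 0)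
                     <= rask t i) /\
        exists Sstar : nat -> Omega -> R,
          (forall t w, (t <= T)%N -> Sl t w <= Sstar t w <= Sh t w) /\
          martingale T p F (fun t w => disc B t * Sstar t w).

(* Main.v *)
Require Import Defs.
From HB Require Import structures.
From mathcomp Require Import all_boot all_order all_algebra.
From mathcomp Require Import ring lra zify.
Import Order.TTheory GRing.Theory Num.Theory.
Set Implicit Arguments.
Unset Strict Implicit.
Local Open Scope ring_scope.

Section Aux.
Variable R : realFieldType.
Implicit Types (x y z : R).

Lemma posE y x : Num.max (y - x) 0 = if y <= x then 0 else y - x.
Proof.
case: (leP y x) => h.
  by rewrite max_r // subr_le0.
by rewrite max_l // subr_ge0 ltW.
Qed.

Lemma P_mono y x1 x2 : x1 <= x2 -> Num.max (y - x2) 0 <= Num.max (y - x1) 0.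
Proof. by move=> h; rewrite !posE; case: (leP y x1); case: (leP y x2) => *; lra. Qed.

Lemma P_lip y x1 x2 : x1 <= x2 -> Num.max (y - x1) 0 - Num.max (y - x2) 0 <= x2 - x1.
Proof. by move=> h; rewrite !posE; case: (leP y x1); case: (leP y x2) => *; lra. Qed.

Lemma P_conv y x1 x2 x3 : x1 < x2 -> x2 < x3 ->
  (x3 - x2) * (Num.max (y - x2) 0 - Num.max (y - x1) 0) <=
  (x2 - x1) * (Num.max (y - x3) 0 - Num.max (y - x2) 0).
Proof.
move=> h1 h2; rewrite !posE; case: (leP y x1); case: (leP y x2); case: (leP y x3) => *; nra.
Qed.

Lemma P_strict y x1 x2 : x1 < x2 ->
  Num.max (y - x1) 0 = Num.max (y - x2) 0 -> Num.max (y - x1) 0 = 0.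
Proof. by move=> h; rewrite !posE; case: (leP y x1); case: (leP y x2) => // *; lra. Qed.

Lemma bmax_ub (x : R) m n (F : nat -> R) i : (m <= i < n)%N ->
  F i <= \big[Num.max/x]_(m <= j < n) F j.
Proof. by move=> hi; apply: le_bigmax_seq => //; rewrite mem_index_iota. Qed.

Lemma bmax_ex (x : R) m n (F : nat -> R) :
  \big[Num.max/x]_(m <= j < n) F j = x \/ exists i, (m <= i < n)%N /\ \big[Num.max/x]_(m <= j < n) F j = F i.
Proof.
rewrite big_nat_cond.
apply: (big_ind (fun v => v = x \/ exists i, (m <= i < n)%N /\ v = F i)).
- by left.
- move=> u w hu hw; rewrite maxEle; by case: ifP.
- move=> i /andP[hi _]; right; by exists i.
Qed.

End Aux.

Section Construct.
Variables (R : realFieldType) (n : nat) (k a b : nat -> R).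

Definition lo j := \big[Num.max/-1]_(1 <= i < j) ((b j - a i) / (k j - k i)).
Definition beta s := - \big[Num.max/(s * k 1 - a 1)]_(1 <= i < n.+1) (s * k i - a i).
Definition Lf s x := s * x + beta s.
Definition cc j := \big[Num.max/Lf (lo 1) (k j)]_(1 <= i < n.+1) Lf (lo i) (k j).

Hypothesis Hk : forall i, (1 <= i <= n)%N -> 0 < k i.
Hypothesis Hkinc : forall i j, (1 <= i)%N -> (i < j)%N -> (j <= n)%N -> k i < k j.
Hypothesis Hba : forall i, (1 <= i <= n)%N -> 0 < b i /\ b i <= a i.
Hypothesis H1 : forall i j l, (1 <= i)%N -> (i < j)%N -> (j < l)%N -> (l <= n)%N ->
           (a l - b j) / (k l - k j) >= (b j - a i) / (k j - k i).
Hypothesis H2 : forall i l, (1 <= i)%N -> (i < l)%N -> (l <= n)%N ->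
           (a l - b i) / (k l - k i) >= -1.
Hypothesis H3 : forall i j, (1 <= i)%N -> (i < j)%N -> (j <= n)%N -> b j < a i.

Lemma lo_ge1 j : -1 <= lo j.
Proof. exact: bigmax_ge_id. Qed.

Lemma lo_term i j : (1 <= i < j)%N -> (b j - a i) / (k j - k i) <= lo j.
Proof. exact: bmax_ub. Qed.

Lemma lo_neg j : (j <= n)%N -> lo j < 0.
Proof.
move=> hj; rewrite /lo big_nat_cond; apply: bigmax_lt; first by rewrite oppr_lt0 ltr01.
move=> i /andP[/andP[h1 h2] _]; have hk := Hkinc h1 h2 hj.
rewrite ltr_pdivrMr ?subr_gt0 // mul0r subr_lt0; apply: H3 => //.
Qed.

Lemma lo_le j l : (j < l)%N -> (l <= n)%N -> (1 <= j)%N -> lo j <= (a l - b j) / (k l - k j).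
Proof.
move=> hjl hl hj; rewrite /lo big_nat_cond; apply: bigmax_le; first exact: H2.
move=> i /andP[/andP[h1 h2] _]; exact: H1.
Qed.

Lemma beta_le s i : (1 <= i <= n)%N -> beta s <= a i - s * k i.
Proof.
move=> hi; rewrite /beta lerNl opprB; apply: bmax_ub; by rewrite ltnS.
Qed.

Lemma beta_ge s v : (1 <= n)%N -> (forall i, (1 <= i <= n)%N -> v <= a i - s * k i) -> v <= beta s.
Proof.
move=> hn hv; rewrite /beta lerNr big_nat_cond; apply: bigmax_le.
  have := hv 1%N; rewrite hn => /(_ isT); lra.
move=> i /andP[/andP[h1 h2] _]; have := hv i; rewrite h1 -ltnS h2 => /(_ isT); lra.
Qed.

Lemma Lf_le s i : (1 <= i <= n)%N -> Lf s (k i) <= a i.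
Proof. move=> hi; have := beta_le s hi; rewrite /Lf; lra. Qed.

Lemma cc_ge j i : (1 <= i <= n)%N -> Lf (lo i) (k j) <= cc j.
Proof. move=> hi; apply: bmax_ub; by rewrite ltnS. Qed.

Lemma cc_ex j : (1 <= n)%N -> exists i, (1 <= i <= n)%N /\ cc j = Lf (lo i) (k j).
Proof.
move=> hn; rewrite /cc; case: (bmax_ex (Lf (lo 1) (k j)) 1 n.+1 (fun i => Lf (lo i) (k j))) => [->|[i [hi ->]]].
  by exists 1%N; rewrite hn.
by exists i; rewrite -ltnS.
Qed.

Lemma cc_le j : (1 <= j <= n)%N -> cc j <= a j.
Proof.
move=> hj; have hn : (1 <= n)%N by case/andP: hj => h1 h2; apply: leq_trans h2.
by case: (cc_ex j hn) => i [hi ->]; apply: Lf_le.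
Qed.

Lemma cc_geb j : (1 <= j <= n)%N -> b j <= cc j.
Proof.
move=> hj; have hn : (1 <= n)%N by case/andP: hj => h1 h2; apply: leq_trans h2.
apply: le_trans (cc_ge j hj).
rewrite /Lf; suff : b j - lo j * k j <= beta (lo j) by lra.
apply: beta_ge => // i hi.
case/andP: hj => hj1 hj2; case/andP: hi => hi1 hi2.
case: (ltngtP i j) => hij.
- have hk := Hkinc hi1 hij hj2.
  have := lo_term (i:=i) (j:=j); rewrite hi1 hij => /(_ isT).
  rewrite ler_pdivrMr ?subr_gt0 //; nra.
- have hk := Hkinc hj1 hij hi2.
  have := lo_le hij hi2 hj1.
  rewrite ler_pdivlMr ?subr_gt0 //; nra.
- subst i; have := Hba (i:=j); rewrite hi1 hi2 => /(_ isT) [] *; lra.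
Qed.

Lemma cc_step j : (1 <= j)%N -> (j < n)%N ->
  -(k j.+1 - k j) <= cc j.+1 - cc j /\ cc j.+1 - cc j < 0.
Proof.
move=> hj hjn; have hn : (1 <= n)%N by apply: leq_trans hjn.
have hk := Hkinc hj (ltnSn j) hjn.
split.
  case: (cc_ex j hn) => i [hi ->].
  have := cc_ge j.+1 hi; have := lo_ge1 i; rewrite /Lf; nra.
case: (cc_ex j.+1 hn) => i [hi ->].
have := cc_ge j hi; have := lo_neg (j:=i); case/andP: hi => _ -> => /(_ isT).
rewrite /Lf; nra.
Qed.

Lemma cc_conv j : (1 <= j)%N -> (j.+2 <= n)%N ->
  (cc j.+1 - cc j) / (k j.+1 - k j) <= (cc j.+2 - cc j.+1) / (k j.+2 - k j.+1).
Proof.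
move=> hj hjn; have hn : (1 <= n)%N by apply: leq_trans hjn.
have hk1 := Hkinc hj (ltnSn j) (ltnW hjn).
have hk2 := Hkinc (ltn0Sn j) (ltnSn j.+1) hjn.
case: (cc_ex j.+1 hn) => i [hi E].
have h1 := cc_ge j hi; have h2 := cc_ge j.+2 hi.
apply: (@le_trans _ _ (lo i)).
  rewrite ler_pdivrMr ?subr_gt0 //; move: h1; rewrite E /Lf; nra.
rewrite ler_pdivlMr ?subr_gt0 //; move: h2; rewrite E /Lf; nra.
Qed.


Definition sl j := if (0 < j < n)%N then (cc j.+1 - cc j) / (k j.+1 - k j) else -1.
Definition mass m := if n == 0%N then (m == 0%N)%:R
  else if (m < n)%N then sl m - sl m.-1 else if m == n then - sl n.-1 else 0.
Definition val m := if n == 0%N then 1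
  else if (m < n)%N then k (maxn m 1) else k n - cc n / sl n.-1.

Lemma sl_range j : -1 <= sl j /\ sl j < 0.
Proof.
rewrite /sl; case: ifP => [/andP[h1 h2]|_]; last by split; [lra|rewrite oppr_lt0 ltr01].
have hk := Hkinc h1 (ltnSn j) h2.
have [c1 c2] := cc_step h1 h2.
split; first by rewrite ler_pdivlMr ?subr_gt0 //; lra.
by rewrite ltr_pdivrMr ?subr_gt0 // mul0r.
Qed.

Lemma sl_mono j : (0 < j < n)%N -> sl j.-1 <= sl j.
Proof.
case: j => // j /andP[_ hj] /=.
case: j hj => [|j] hj; first by rewrite {1}/sl /=; case: (sl_range 1).
rewrite /sl /= hj ltnW //=; exact: cc_conv.
Qed.

Lemma tele (f : nat -> R) p : \sum_(m < p.+1) (f m - f m.-1) = f p - f 0%N.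
Proof.
elim: p => [|p IH]; first by rewrite big_ord_recr big_ord0 /= add0r.
by rewrite big_ord_recr IH /=; lra.
Qed.

Lemma psum p : (p < n)%N -> \sum_(m < p.+1) mass m = sl p + 1.
Proof.
move=> hp; have hn : (n == 0%N) = false by case: n hp.
rewrite (eq_bigr (fun m : 'I_p.+1 => sl m - sl (nat_of_ord m).-1)); last first.
  move=> m _; rewrite /mass hn (leq_trans (ltn_ord m)) //.
by rewrite tele /sl /=; lra.
Qed.

Lemma mass_ge0 m : 0 <= mass m.
Proof.
rewrite /mass; case: eqP => _; first by case: (m == 0%N); rewrite ?ler01 ?lexx.
case: ifP => hm.
  case: m hm => [|m] hm; first by rewrite subrr.
  rewrite subr_ge0; apply: sl_mono; by rewrite hm.
case: eqP => _ //; have [_ h] := sl_range n.-1; lra.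
Qed.

Lemma mass_out m : (n < m)%N -> mass m = 0.
Proof.
move=> hm; rewrite /mass; case: eqP => hn.
  by case: m hm => //; rewrite hn.
rewrite ltnNge (ltnW hm) /=; case: eqP => // E; by rewrite E ltnn in hm.
Qed.

Lemma sum_mass : \sum_(m < n.+1) mass m = 1.
Proof.
case hn: (n == 0%N).
  by rewrite (eqP hn) big_ord_recr big_ord0 /mass hn /= add0r.
rewrite big_ord_recr /=.
have hp : (0 < n)%N by rewrite lt0n hn.
rewrite -(prednK hp) psum ?prednK // ?ltn_predL //.
rewrite /mass hn ltnn eqxx; lra.
Qed.

Lemma cc_pos : (1 <= n)%N -> 0 < cc n.
Proof.
move=> hn; have := cc_geb (j:=n); rewrite hn leqnn => /(_ isT).
have := Hba (i:=n); rewrite hn leqnn => /(_ isT) [] *; lra.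
Qed.

Lemma valn_gt : (1 <= n)%N -> k n < k n - cc n / sl n.-1.
Proof.
move=> hn; have hc := cc_pos hn; have [_ hs] := sl_range n.-1.
have h : 0 < cc n / - sl n.-1 by apply: divr_gt0; lra.
rewrite invrN mulrN in h; lra.
Qed.

Lemma val_pos m : 0 < val m.
Proof.
rewrite /val; case: eqP => [_|hn]; first exact: ltr01.
have hn' : (1 <= n)%N by rewrite lt0n; apply/eqP.
case: ifP => hm.
  apply: Hk; rewrite leq_maxr /= geq_max hn' andbT; exact: ltnW.
have := valn_gt hn'; have := Hk (i:=n); rewrite hn' leqnn => /(_ isT); lra.
Qed.

Lemma k_mono i j : (1 <= i)%N -> (i <= j)%N -> (j <= n)%N -> k i <= k j.
Proof.
move=> h1 h2 h3; case: (ltngtP i j) h2 => // hij _; last by rewrite hij.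
exact/ltW/Hkinc.
Qed.

Definition D i := \sum_(m < n.+1) mass m * Num.max (val m - k i) 0.

Lemma D_n : (1 <= n)%N -> D n = cc n.
Proof.
move=> hn; have hn0 : (n == 0%N) = false by case: n hn.
rewrite /D big_ord_recr /= big1 ?add0r; last first.
  move=> m _; rewrite posE /val hn0 ltn_ord ifT ?mulr0 //.
  apply: k_mono => //; rewrite ?leq_maxr // geq_max hn andbT; exact: ltnW.
rewrite posE /val /mass hn0 ltnn eqxx ifF; last first.
  by apply/negbTE; rewrite -ltNge; exact: valn_gt.
have [_ hs] := sl_range n.-1.
have hs0 : sl n.-1 != 0 by rewrite ltr0_neq0.
by field.
Qed.

Lemma pw i m : (1 <= i)%N -> (i < n)%N -> (m <= n)%N ->
  Num.max (val m - k i) 0 - Num.max (val m - k i.+1) 0 =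
  (k i.+1 - k i) * (1 - (m < i.+1)%N%:R).
Proof.
move=> h1 h2 hm; have hn0 : (n == 0%N) = false by case: n h2.
have hk := Hkinc h1 (ltnSn i) h2.
case: (ltnP m i.+1) => hmi.
  have hv : val m <= k i.
    rewrite /val hn0 (leq_trans hmi h2); apply: k_mono => //; last exact: ltnW.
    by rewrite leq_max ltnS leqnn orbT.
    by rewrite geq_max h1 -ltnS hmi.
  rewrite !posE hv ifT ?subrr ?mulr0 ?subr0 //; apply: (le_trans hv); exact: ltW.
have hv : k i.+1 <= val m.
  rewrite /val hn0; case: ifP => hmn.
    by apply: k_mono => //; rewrite (maxn_idPl (leq_trans _ hmi)).
  have := valn_gt (leq_trans h1 (ltnW h2)); have := k_mono (ltn0Sn i) h2 (leqnn n); lra.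
rewrite !posE; case: (leP (val m) (k i)) => h3; first lra.
case: (leP (val m) (k i.+1)) => h4; rewrite /= ?subr0 ?mulr1; lra.
Qed.

Lemma D_step i : (1 <= i)%N -> (i < n)%N -> D i = D i.+1 + (cc i - cc i.+1).
Proof.
move=> h1 h2.
have hk := Hkinc h1 (ltnSn i) h2.
have E : D i = D i.+1 + \sum_(m < n.+1) ((k i.+1 - k i) * mass m -
                (k i.+1 - k i) * (mass m * (m < i.+1)%N%:R)).
  rewrite /D -big_split; apply: eq_bigr => m _ /=.
  have := pw (m:=m) h1 h2; rewrite -ltnS ltn_ord => /(_ isT) P.
  rewrite (_ : mass m * Num.max (val m - k i) 0 = mass m * Num.max (val m - k i.+1) 0
     + mass m * (Num.max (val m - k i) 0 - Num.max (val m - k i.+1) 0)); last by ring.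
  rewrite P; ring.
rewrite E sumrB -!mulr_sumr sum_mass.
have -> : \sum_(m < n.+1) mass m * (m < i.+1)%N%:R = \sum_(m < i.+1) mass m.
  rewrite (big_ord_widen n.+1 mass (leqW h2)) [RHS]big_mkcond /=.
  by apply: eq_bigr => m _; case: ifP; rewrite ?mulr1 ?mulr0.
rewrite psum //.
have [c1 c2] := cc_step h1 h2.
rewrite /sl h1 h2 /=.
have hd : k i.+1 - k i != 0 by rewrite subr_eq0 gt_eqF.
field; by [].
Qed.

Lemma D_call i : (1 <= i <= n)%N -> D i = cc i.
Proof.
case/andP=> h1 h2.
have hn : (1 <= n)%N by apply: leq_trans h2.
suff H : forall d, (d < n)%N -> D (n - d) = cc (n - d).
  have := H (n - i)%N; rewrite subKn // => -> //; lia.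
elim=> [|d IH] hd; first by rewrite subn0 D_n.
have e : (n - d)%N = (n - d.+1).+1 by lia.
rewrite D_step; [|lia|lia].
by rewrite -e IH ?(ltnW hd) //; lra.
Qed.

End Construct.

Lemma prod_marg (R : comNzRingType) (I J : finType) (Q : I -> J -> R) (G : J -> R) (i0 : I) :
  (forall s, \sum_j Q s j = 1) ->
  \sum_(f : {ffun I -> J}) (\prod_s Q s (f s)) * G (f i0) = \sum_j Q i0 j * G j.
Proof.
move=> HQ.
pose F s j := Q s j * (if s == i0 then G j else 1).
transitivity (\prod_s \sum_j F s j).
  rewrite bigA_distr_bigA; apply: eq_bigr => f _; rewrite /F big_split /=.
  congr (_ * _); rewrite (bigD1 i0) //= eqxx big1 ?mulr1 // => s /negbTE ->; done.
rewrite (bigD1 i0) //= [X in _ * X]big1 ?mulr1.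
  by apply: eq_bigr => j _; rewrite /F eqxx.
by move=> s /negbTE hs; rewrite -(HQ s); apply: eq_bigr => j _; rewrite /F hs mulr1.
Qed.

Lemma prod_total (R : comNzRingType) (I J : finType) (Q : I -> J -> R) :
  (forall s, \sum_j Q s j = 1) ->
  \sum_(f : {ffun I -> J}) (\prod_s Q s (f s)) = 1.
Proof.
move=> HQ; rewrite -bigA_distr_bigA big1 // => s _; exact: HQ.
Qed.

Lemma widen_sum (R : realFieldType) (F : nat -> R) n M : (n < M)%N ->
  (forall m, (n < m)%N -> F m = 0) -> \sum_(j < M) F j = \sum_(m < n.+1) F m.
Proof.
move=> hn hF; rewrite (big_ord_widen M F hn) [RHS]big_mkcond /=.
apply: eq_bigr => j _; case: ifP => // h; apply: hF; by rewrite ltnNge -ltnS h.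
Qed.

Section Good.
Variables (R : realFieldType) (n : nat) (k a b : nat -> R).
Definition good := (forall i, (1 <= i <= n)%N -> 0 < k i) /\
  (forall i j, (1 <= i)%N -> (i < j)%N -> (j <= n)%N -> k i < k j) /\
  (forall i, (1 <= i <= n)%N -> 0 < b i /\ b i <= a i) /\
  (forall i j l, (1 <= i)%N -> (i < j)%N -> (j < l)%N -> (l <= n)%N ->
           (a l - b j) / (k l - k j) >= (b j - a i) / (k j - k i)) /\
  (forall i l, (1 <= i)%N -> (i < l)%N -> (l <= n)%N ->
           (a l - b i) / (k l - k i) >= -1) /\
  (forall i j, (1 <= i)%N -> (i < j)%N -> (j <= n)%N -> b j < a i).

Hypothesis G : good.

Lemma g_mass_ge0 m : 0 <= mass n k a b m.
Proof. by case: G => [? [? [? [? [? ?]]]]]; exact: mass_ge0. Qed.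
Lemma g_mass_out m : (n < m)%N -> mass n k a b m = 0.
Proof. exact: mass_out. Qed.
Lemma g_sum_mass : \sum_(m < n.+1) mass n k a b m = 1.
Proof. by case: G => [? [? [? [? [? ?]]]]]; exact: sum_mass. Qed.
Lemma g_val_pos m : 0 < val n k a b m.
Proof. by case: G => [? [? [? [? [? ?]]]]]; exact: val_pos. Qed.
Lemma g_call i : (1 <= i <= n)%N ->
  b i <= \sum_(m < n.+1) mass n k a b m * Num.max (val n k a b m - k i) 0 <= a i.
Proof.
move=> hi; case: G => [? [? [? [? [? ?]]]]].
have -> : \sum_(m < n.+1) mass n k a b m * Num.max (val n k a b m - k i) 0 = D n k a b i by [].
rewrite D_call //; apply/andP; split; [exact: cc_geb|exact: cc_le].
Qed.
End Good.

Section Nec.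
Variables (R : realFieldType) (Omega : finType) (p Y : Omega -> R).
Hypothesis Hp : forall w, 0 <= p w.
Hypothesis Hp1 : \sum_w p w = 1.

Lemma expect_comb (f1 f2 f3 : Omega -> R) (x y z : R) :
  expect p (fun w => x * f1 w + y * f2 w + z * f3 w) =
  x * expect p f1 + y * expect p f2 + z * expect p f3.
Proof. rewrite /expect !mulr_sumr -!big_split; apply: eq_bigr => w _ /=; ring. Qed.

Lemma expect_ge0 (g : Omega -> R) : (forall w, 0 <= g w) -> 0 <= expect p g.
Proof. move=> h; apply: sumr_ge0 => w _; exact: mulr_ge0. Qed.

Lemma expect1 : expect p (fun _ => 1) = 1.
Proof. by rewrite /expect; under eq_bigr do rewrite mulr1. Qed.

Variables (n : nat) (k a b : nat -> R).
Let P i w := Num.max (Y w - k i) 0.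
Let C i := expect p (P i).

Hypothesis Hkinc : forall i j, (1 <= i)%N -> (i < j)%N -> (j <= n)%N -> k i < k j.
Hypothesis Hb : forall i, (1 <= i <= n)%N -> 0 < b i.
Hypothesis HC : forall i, (1 <= i <= n)%N ->
  b i <= expect p (fun w => Num.max (Y w - k i) 0) <= a i.

Lemma necessity :
    [/\ (forall i j l, (1 <= i)%N -> (i < j)%N -> (j < l)%N -> (l <= n)%N ->
           (a l - b j) / (k l - k j) >= (b j - a i) / (k j - k i)),
        (forall i l, (1 <= i)%N -> (i < l)%N -> (l <= n)%N ->
           (a l - b i) / (k l - k i) >= -1),
        (forall i j, (1 <= i)%N -> (i < j)%N -> (j <= n)%N ->
           b j <= a i) &
        (forall i j, (1 <= i)%N -> (i < j)%N -> (j <= n)%N ->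
           b j = a i -> b j = 0 /\ a i = 0)].
Proof.
have HCi : forall i, (1 <= i <= n)%N -> b i <= C i /\ C i <= a i.
  by move=> i hi; have /andP[] := HC hi.
have mono : forall i j, (1 <= i)%N -> (i < j)%N -> (j <= n)%N -> C j <= C i.
  move=> i j h1 h2 h3; have hk := Hkinc h1 h2 h3.
  have H : 0 <= expect p (fun w => 1 * P i w + (-1) * P j w + 0 * P i w).
    by apply: expect_ge0 => w; have := P_mono (Y w) (ltW hk); rewrite /P; lra.
  rewrite expect_comb in H; rewrite /C; lra.
split.
- move=> i j l h1 h2 h3 h4.
  have hij := Hkinc h1 h2 (ltnW (leq_trans h3 h4)).
  have hjl := Hkinc (leq_trans h1 (ltnW h2)) h3 h4.
  have H0 : 0 <= expect p (fun w => (k j - k i) * P l w + (-(k l - k i)) * P j w + (k l - k j) * P i w).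
    apply: expect_ge0 => w; have := P_conv (Y w) hij hjl; rewrite /P; nra.
  rewrite expect_comb in H0.
  have [bj cj] := HCi j ltac:(lia).
  have [bi ci] := HCi i ltac:(lia).
  have [bl cl] := HCi l ltac:(lia).
  rewrite ler_pdivrMr ?subr_gt0 // mulrAC ler_pdivlMr ?subr_gt0 //.
  rewrite /C in bj cj bi ci bl cl.
  nra.
- move=> i l h1 h2 h3.
  have hil := Hkinc h1 h2 h3.
  have H0 : 0 <= expect p (fun w => (k l - k i) * 1 + (-1) * P i w + 1 * P l w).
    apply: expect_ge0 => w; have := P_lip (Y w) (ltW hil); rewrite /P; lra.
  rewrite (expect_comb (fun _ => 1)) expect1 in H0.
  have [bi ci] := HCi i ltac:(lia).
  have [bl cl] := HCi l ltac:(lia).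
  rewrite /C in bi ci bl cl.
  rewrite ler_pdivlMr ?subr_gt0 //; lra.
- move=> i j h1 h2 h3.
  have [bj cj] := HCi j ltac:(lia).
  have [bi ci] := HCi i ltac:(lia).
  have := mono i j h1 h2 h3; lra.
- move=> i j h1 h2 h3 E.
  have hij := Hkinc h1 h2 h3.
  have [bj cj] := HCi j ltac:(lia).
  have [bi ci] := HCi i ltac:(lia).
  have := mono i j h1 h2 h3 => m.
  have hb := Hb (i:=j) ltac:(lia).
  have Cij : C i - C j = 0 by lra.
  have S : \sum_w p w * (P i w - P j w) = 0.
    transitivity (C i - C j); last exact: Cij.
    rewrite /C /expect -sumrB; apply: eq_bigr => v _; ring.
  have Z : forall w, p w * (P i w - P j w) = 0.
    move=> w; apply: (psumr_eq0P _ S) => // v _.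
    apply: mulr_ge0 => //; have := P_mono (Y v) (ltW hij); rewrite /P; lra.
  have Ci0 : C i = 0.
    rewrite /C /expect big1 // => w _.
    have := Z w; move/eqP; rewrite mulf_eq0 => /orP[/eqP ->|]; first by rewrite mul0r.
    by rewrite subr_eq0 => /eqP/(P_strict hij) h; rewrite /P h mulr0.
  exfalso; lra.
Qed.
End Nec.
Unset Implicit Arguments.
Theorem mainTheorem8 (R : rcfType) (T : nat) (B : nat -> R) (N : nat -> nat)
  (K rbid rask : nat -> nat -> R) (S0bid S0ask : R) :
  (1 <= T)%N ->
  (forall t, (t <= T)%N -> 0 < B t) -> B 0%N = 1 ->
  (forall t, (1 <= t <= T)%N ->
     (forall i, (1 <= i <= N t)%N -> 0 < K t i) /\
     (forall i j, (1 <= i)%N -> (i < j)%N -> (j <= N t)%N -> K t i < K t j)) ->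
  (forall t i, (1 <= t <= T)%N -> (1 <= i <= N t)%N ->
     0 < rbid t i /\ rbid t i <= rask t i) ->
  0 < S0bid -> S0bid <= S0ask ->
  consistent T B N K rbid rask S0bid S0ask <->
  (forall t, (1 <= t <= T)%N ->
    [/\ (* (i) *)
        (forall i j l, (1 <= i)%N -> (i < j)%N -> (j < l)%N -> (l <= N t)%N ->
           (rask t l - rbid t j) / (dstrike B K t l - dstrike B K t j)
           >= (rbid t j - rask t i) / (dstrike B K t j - dstrike B K t i)),
        (* (ii) *)
        (forall i l, (1 <= i)%N -> (i < l)%N -> (l <= N t)%N ->
           (rask t l - rbid t i) / (dstrike B K t l - dstrike B K t i) >= -1),
        (* (iii) *)
        (forall i j, (1 <= i)%N -> (i < j)%N -> (j <= N t)%N ->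
           rbid t j <= rask t i) &
        (* (iv) *)
        (forall i j, (1 <= i)%N -> (i < j)%N -> (j <= N t)%N ->
           rbid t j = rask t i -> rbid t j = 0 /\ rask t i = 0)]).
Proof.
move=> HT HB HB0 HK Hr H0 H01.
have Hkinc : forall t, (1 <= t <= T)%N -> forall i j, (1 <= i)%N -> (i < j)%N -> (j <= N t)%N ->
    dstrike B K t i < dstrike B K t j.
  move=> t ht i j h1 h2 h3; have [_ hK] := HK t ht.
  rewrite /dstrike ltr_pM2l ?hK // /disc invr_gt0; apply: HB; by case/andP: ht.
split.
- case=> Omega [p [F [Sl [Sh [SC [[Hp Hp1] [_ [_ [_ [_ [_ [_ [HC _]]]]]]]]]]]]].
  move=> t ht.
  apply: (@necessity R Omega p (fun w => disc B t * SC t w) Hp Hp1 (N t)).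
  + exact: Hkinc.
  + by move=> i hi; have [] := Hr t i ht hi.
  + by move=> i hi; apply: HC.
- move=> Hc.
  have Bne : forall s, (s <= T)%N -> B s != 0 by move=> s hs; rewrite gt_eqF ?HB.
  have G : forall t, (1 <= t <= T)%N -> good (N t) (dstrike B K t) (rask t) (rbid t).
    move=> t ht; have [Hi Hii Hiii Hiv] := Hc t ht; have [hK hKi] := HK t ht.
    split; [|split;[|split;[|split;[|split]]]].
    + move=> i hi; rewrite /dstrike mulr_gt0 ?hK // /disc invr_gt0; apply: HB; by case/andP: ht.
    + exact: Hkinc.
    + by move=> i hi; apply: Hr.
    + exact: Hi.
    + exact: Hii.
    + move=> i j h1 h2 h3; rewrite lt_neqAle Hiii // andbT; apply/eqP => E.
      have [hb _] := Hr t j ht ltac:(lia).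
      have := Hiv i j h1 h2 h3 E; lra.
  pose Q (s m : nat) : R := if s == 0%N then (m == 0%N)%:R
                           else mass (N s) (dstrike B K s) (rask s) (rbid s) m.
  pose X (s m : nat) : R := val (N s) (dstrike B K s) (rask s) (rbid s) m.
  pose M := (\max_(s < T.+1) N s).+1.
  have hM : forall s, (s <= T)%N -> (N s < M)%N.
    move=> s hs; rewrite ltnS.
    by have := @leq_bigmax _ (fun s : 'I_T.+1 => N s) (inord s); rewrite inordK.
  have Q0 : forall s m, (s <= T)%N -> 0 <= Q s m.
    move=> s m hs; rewrite /Q; case: eqP => h0; first by case: (m == 0%N).
    apply: g_mass_ge0; apply: G; lia.
  have Q1 : forall s, (s <= T)%N -> \sum_(j < M) Q s j = 1.
    move=> s hs; rewrite (widen_sum (n := if s == 0%N then 0%N else N s)).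
    + rewrite /Q; case: eqP => h0; first by rewrite big_ord_recr big_ord0 /= add0r.
      apply: g_sum_mass; apply: G; lia.
    + case: eqP => _ //; exact: hM.
    + move=> m; rewrite /Q; case: eqP => h0; first by case: m.
      apply: g_mass_out.
  pose Omega := {ffun 'I_T.+1 -> 'I_M}.
  pose p (f : Omega) := \prod_(s : 'I_T.+1) Q s (f s).
  pose SC (t : nat) (f : Omega) : R := if t == 0%N then S0bid else B t * X t (f (inord t)).
  pose Sst (t : nat) (f : Omega) : R := S0bid * B t.
  pose Sl (t : nat) (f : Omega) : R := if t == 0%N then S0bid else Num.min (SC t f) (Sst t f).
  pose Sh (t : nat) (f : Omega) : R := if t == 0%N then S0ask else Num.max (SC t f) (Sst t f).
  have Q1' : forall s : 'I_T.+1, \sum_(j < M) Q s j = 1 by move=> s; apply: Q1; rewrite -ltnS.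
  have e : forall s, (s <= T)%N -> (B s)^-1 * (S0bid * B s) = S0bid.
    by move=> s hs; rewrite mulrCA mulVf ?mulr1 ?Bne.
  exists Omega, p, (fun _ => [set: {set Omega}]), Sl, Sh, SC.
  split; [split|split; [split|split; [|split; [|split; [|split; [|split; [|split]]]]]]].
  + move=> f; apply: prodr_ge0 => s _; apply: Q0; by rewrite -ltnS.
  + rewrite /p; exact: (prod_total Q1').
  + by move=> t ht; split => *; rewrite in_setT.
  + by move=> t ht; apply: subxx.
  + by move=> t ht r; rewrite in_setT.
  + by move=> t ht r; rewrite in_setT.
  + by move=> t ht r; rewrite in_setT.
  + move=> t w ht; rewrite /Sl /Sh; case: eqP => h0.
      by rewrite /SC h0 /=; split => //; rewrite lexx H01.
    have ht1 : (1 <= t <= T)%N by lia.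
    have hSC : 0 < SC t w.
      rewrite /SC; case: eqP => // _; apply: mulr_gt0; first exact: HB.
      exact: (g_val_pos (G t ht1)).
    have hSs : 0 < Sst t w by apply: mulr_gt0 => //; exact: HB.
    rewrite minEle maxEle; case: (leP (SC t w) (Sst t w)) => h; (split; [lra|apply/andP; split; lra]).
  + by [].
  + move=> t i ht hi; have t0 : (t == 0%N) = false by case: t ht {hi}.
    have tT : (t <= T)%N by case/andP: ht.
    have -> : expect p (fun w => Num.max (disc B t * SC t w - dstrike B K t i) 0) =
        \sum_(j < M) Q (inord t : 'I_T.+1) j * Num.max (X t j - dstrike B K t i) 0.
      rewrite /expect -(prod_marg (fun j : 'I_M => Num.max (X t j - dstrike B K t i) 0) (inord t) Q1').
      apply: eq_bigr => f _; congr (_ * _).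
      by rewrite /SC t0 /disc mulrA mulVf ?mul1r ?Bne.
    rewrite inordK ?ltnS // /Q t0.
    rewrite (widen_sum (F := fun m => mass (N t) (dstrike B K t) (rask t) (rbid t) m *
        Num.max (X t m - dstrike B K t i) 0) (hM t tT)); last first.
      by move=> m hm; rewrite g_mass_out ?mul0r.
    exact: (g_call (G t ht)).
  + exists Sst; split.
      move=> t w ht; rewrite /Sl /Sh; case: eqP => h0.
        by rewrite /Sst h0 HB0 mulr1 lexx H01.
      rewrite minEle maxEle; case: (leP (SC t w) (Sst t w)) => h; apply/andP; split; lra.
    split; first by move=> t ht r; rewrite in_setT.
    move=> t ht A _; apply: eq_bigr => w _; rewrite /Sst !e //; exact: ltnW.
Qed.
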